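(* In a discrete Dubins path, a long edge or a short edge can be adjacent only to a normal edge.
   Context: Fix an angle $\theta$ with $0\le\theta\le\pi/2$ such that $2\pi/\theta$ is an integer, and a length $\ell>0$. For a polygonal path, the turn at an internal vertex is the angle in $[0,\pi]$ between the direction of the incoming edge and the direction of the outgoing edge. An edge is short if its length is $<\ell$, normal if $=\ell$, long if $>\ell$. An edge $e$ with an adjacent edge at each end is an inflection edge if its two adjacent edges lie on opposite sides of the supporting line of $e$, and non-inflection otherwise. A discrete curvature-constrained path is a polygonal path such that: (i) the turn at every internal vertex is at most $\theta$; (ii) no two adjacent edges are both short; (iii) for every short non-inflection edge $ab$ with adjacent edges $a^-a$ and $bb^+$, the angle between the directions $\overrightarrow{a^-a}$ and $\overrightarrow{bb^+}$ is at most $\theta$. A configuration is a pair $(u,U)$ of a point $u$ and a vector $U$ of length $\ell$. A polygonal path $P$ with first vertex $u$ starts at $(u,U)$ if prepending the segment from $u-U$ to $u$ (the pre-edge) yields a discrete curvature-constrained path; $P$ with last vertex $v$ ends at $(v,V)$ if appending the segment from $v$ to $v+V$ (the post-edge) yields a discrete curvature-constrained path. A discrete Dubins path is a discrete curvature-constrained path of minimum length among all those starting at a given configuration $\mathcal U$ and ending at a given configuration $\mathcal V$. Standing assumption: paths make a non-zero turn at every internal vertex (no vertex lies in the interior of a straight portion of the path). *)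

(* Defs.v *)
From Stdlib Require Import Reals Lra List.
Open Scope R_scope.

Definition pt : Type := (R * R)%type.

Definition vadd (a b : pt) : pt := (fst a + fst b, snd a + snd b).
Definition vsub (a b : pt) : pt := (fst a - fst b, snd a - snd b).
Definition dot (a b : pt) : R := fst a * fst b + snd a * snd b.
Definition cross (a b : pt) : R := fst a * snd b - snd a * fst b.
Definition vnorm (a : pt) : R := sqrt (dot a a).

Definition angle (a b : pt) : R := acos (dot a b / (vnorm a * vnorm b)).

Definition vtx (p : list pt) (i : nat) : pt := nth i p (0, 0).

Definition edge_vec (p : list pt) (i : nat) : pt := vsub (vtx p (S i)) (vtx p i).
Definition edge_len (p : list pt) (i : nat) : R := vnorm (edge_vec p i).

Definition is_short (l : R) (p : list pt) (i : nat) : Prop := edge_len p i < l.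
Definition is_normal (l : R) (p : list pt) (i : nat) : Prop := edge_len p i = l.
Definition is_long (l : R) (p : list pt) (i : nat) : Prop := edge_len p i > l.

(* turn at internal vertex i+1 (between edge i and edge i+1) *)
Definition turn (p : list pt) (i : nat) : R := angle (edge_vec p i) (edge_vec p (S i)).

(* edge i+1 (with adjacent edges i and i+2) is an inflection edge:
   the adjacent edges lie on (strictly) opposite sides of its supporting line *)
Definition inflection (p : list pt) (i : nat) : Prop :=
  cross (edge_vec p (S i)) (vsub (vtx p i) (vtx p (S i))) *
  cross (edge_vec p (S i)) (vsub (vtx p (S (S (S i)))) (vtx p (S i))) < 0.

Definition path_length (p : list pt) : R :=
  fold_right Rplus 0 (map (edge_len p) (seq 0 (pred (length p)))).

Definition dcc_path (theta l : R) (p : list pt) : Prop :=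
  (p <> nil) /\
  (forall i, (S i < length p)%nat -> vtx p i <> vtx p (S i)) /\
  (forall i, (S (S i) < length p)%nat -> turn p i <= theta) /\
  (forall i, (S (S i) < length p)%nat -> ~ (is_short l p i /\ is_short l p (S i))) /\
  (forall i, (S (S (S i)) < length p)%nat ->
     is_short l p (S i) -> ~ inflection p i ->
     angle (edge_vec p i) (edge_vec p (S (S i))) <= theta).

Definition is_config (l : R) (u U : pt) : Prop := vnorm U = l.

Definition starts_at (theta l : R) (p : list pt) (u U : pt) : Prop :=
  vtx p 0 = u /\ dcc_path theta l (vsub u U :: p).

Definition ends_at (theta l : R) (p : list pt) (v V : pt) : Prop :=
  last p (0, 0) = v /\ dcc_path theta l (p ++ vadd v V :: nil).

Definition nonzero_turns (p : list pt) : Prop :=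
  forall i, (S (S i) < length p)%nat -> turn p i <> 0.

Definition admissible (theta l : R) (u U v V : pt) (p : list pt) : Prop :=
  dcc_path theta l p /\ starts_at theta l p u U /\ ends_at theta l p v V /\
  nonzero_turns p.

Definition discrete_dubins (theta l : R) (u U v V : pt) (p : list pt) : Prop :=
  admissible theta l u U v V p /\
  forall q, admissible theta l u U v V q -> path_length p <= path_length q.

(* Main.v *)
Require Import Defs.
From Stdlib Require Import Reals List.
From Stdlib Require Import Lra Psatz Arith Lia.
Open Scope R_scope.

Definition scale (k : R) (a : pt) : pt := (k * fst a, k * snd a).
Definition z0 : pt := (0,0).

Ltac ptext := apply injective_projections; simpl; ring.

Lemma dot_self_ge0 a : 0 <= dot a a.
Proof. unfold dot; nra. Qed.
Lemma vnorm_ge0 a : 0 <= vnorm a.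
Proof. apply sqrt_pos. Qed.
Lemma vnorm_sq a : vnorm a * vnorm a = dot a a.
Proof. apply sqrt_sqrt, dot_self_ge0. Qed.
Lemma vnorm_eq a x : 0 <= x -> dot a a = x * x -> vnorm a = x.
Proof. intros H1 H2. unfold vnorm. rewrite H2. apply sqrt_square; auto. Qed.
Lemma dot_pos a : a <> z0 -> 0 < dot a a.
Proof.
  destruct a as [x y]; unfold dot, z0; simpl; intros H.
  destruct (Req_dec x 0); destruct (Req_dec y 0); subst; try (exfalso; apply H; reflexivity); nra.
Qed.
Lemma vnorm_pos a : a <> z0 -> 0 < vnorm a.
Proof. intros H. unfold vnorm. apply sqrt_lt_R0, dot_pos, H. Qed.
Lemma lagrange a b : dot a b * dot a b + cross a b * cross a b = dot a a * dot b b.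
Proof. unfold dot, cross; ring. Qed.
Lemma cs_up a b : dot a b <= vnorm a * vnorm b.
Proof.
  pose proof (lagrange a b). pose proof (vnorm_sq a). pose proof (vnorm_sq b).
  pose proof (vnorm_ge0 a). pose proof (vnorm_ge0 b).
  assert (dot a b * dot a b <= (vnorm a * vnorm b) * (vnorm a * vnorm b)) by nra.
  assert (0 <= vnorm a * vnorm b) by nra. nra.
Qed.
Lemma cs_lo a b : - (vnorm a * vnorm b) <= dot a b.
Proof.
  pose proof (lagrange a b). pose proof (vnorm_sq a). pose proof (vnorm_sq b).
  pose proof (vnorm_ge0 a). pose proof (vnorm_ge0 b).
  assert (dot a b * dot a b <= (vnorm a * vnorm b) * (vnorm a * vnorm b)) by nra.
  assert (0 <= vnorm a * vnorm b) by nra. nra.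
Qed.
Lemma cs_strict a b : cross a b <> 0 -> dot a b < vnorm a * vnorm b.
Proof.
  intro Hc.
  pose proof (lagrange a b). pose proof (vnorm_sq a). pose proof (vnorm_sq b).
  pose proof (vnorm_ge0 a). pose proof (vnorm_ge0 b).
  assert (0 < cross a b * cross a b) by (apply Rsqr_pos_lt in Hc; unfold Rsqr in Hc; auto).
  assert (dot a b * dot a b < (vnorm a * vnorm b) * (vnorm a * vnorm b)) by nra.
  assert (0 <= vnorm a * vnorm b) by nra. nra.
Qed.
Lemma vnorm_scale k a : 0 <= k -> vnorm (scale k a) = k * vnorm a.
Proof.
  intro Hk. apply vnorm_eq. pose proof (vnorm_ge0 a); nra.
  pose proof (vnorm_sq a). unfold dot, scale in *; simpl in *. nra.
Qed.
Lemma triangle a b : vnorm (vadd a b) <= vnorm a + vnorm b.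
Proof.
  pose proof (vnorm_ge0 a). pose proof (vnorm_ge0 b). pose proof (vnorm_ge0 (vadd a b)).
  pose proof (vnorm_sq a). pose proof (vnorm_sq b). pose proof (vnorm_sq (vadd a b)).
  pose proof (cs_up a b).
  assert (dot (vadd a b) (vadd a b) = dot a a + 2 * dot a b + dot b b) by (unfold dot, vadd; simpl; ring).
  nra.
Qed.
Lemma triangle_strict a b : cross a b <> 0 -> vnorm (vadd a b) < vnorm a + vnorm b.
Proof.
  intro Hc.
  pose proof (vnorm_ge0 a). pose proof (vnorm_ge0 b). pose proof (vnorm_ge0 (vadd a b)).
  pose proof (vnorm_sq a). pose proof (vnorm_sq b). pose proof (vnorm_sq (vadd a b)).
  pose proof (cs_strict a b Hc).
  assert (dot (vadd a b) (vadd a b) = dot a a + 2 * dot a b + dot b b) by (unfold dot, vadd; simpl; ring).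
  nra.
Qed.

Lemma ratio_bound a b : a <> z0 -> b <> z0 -> -1 <= dot a b / (vnorm a * vnorm b) <= 1.
Proof.
  intros Ha Hb. pose proof (vnorm_pos a Ha). pose proof (vnorm_pos b Hb).
  assert (0 < vnorm a * vnorm b) by nra.
  pose proof (cs_up a b). pose proof (cs_lo a b).
  split.
  - apply (Rmult_le_reg_r (vnorm a * vnorm b)); auto. unfold Rdiv. rewrite Rmult_assoc, Rinv_l by lra. lra.
  - apply (Rmult_le_reg_r (vnorm a * vnorm b)); auto. unfold Rdiv. rewrite Rmult_assoc, Rinv_l by lra. lra.
Qed.

Lemma angle_le_iff a b t : a <> z0 -> b <> z0 -> 0 <= t <= PI ->
  (angle a b <= t <-> cos t * (vnorm a * vnorm b) <= dot a b).
Proof.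
  intros Ha Hb Ht. pose proof (vnorm_pos a Ha). pose proof (vnorm_pos b Hb).
  assert (P: 0 < vnorm a * vnorm b) by nra.
  pose proof (ratio_bound a b Ha Hb) as Hr.
  pose proof (acos_bound (dot a b / (vnorm a * vnorm b))).
  unfold angle. split; intro Hq.
  - assert (Hc2: cos t <= cos (acos (dot a b / (vnorm a * vnorm b)))) by (apply cos_decr_1; lra).
    rewrite cos_acos in Hc2 by auto.
    apply (Rmult_le_compat_r (vnorm a * vnorm b)) in Hc2; [|lra].
    unfold Rdiv in Hc2. rewrite Rmult_assoc, Rinv_l in Hc2 by lra. lra.
  - apply cos_decr_0; try lra. rewrite cos_acos by auto.
    apply (Rmult_le_reg_r (vnorm a * vnorm b)); auto. unfold Rdiv. rewrite Rmult_assoc, Rinv_l by lra. lra.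
Qed.

Lemma angle_sym a b : angle a b = angle b a.
Proof. unfold angle, dot. f_equal. f_equal; ring. Qed.

Lemma angle_scale_l k a b : 0 < k -> a <> z0 -> b <> z0 -> angle (scale k a) b = angle a b.
Proof.
  intros Hk Ha Hb. pose proof (vnorm_pos a Ha). pose proof (vnorm_pos b Hb).
  unfold angle. rewrite vnorm_scale by lra. f_equal.
  replace (dot (scale k a) b) with (k * dot a b) by (unfold dot, scale; simpl; ring).
  field. split; lra.
Qed.
Lemma angle_scale_r k a b : 0 < k -> a <> z0 -> b <> z0 -> angle a (scale k b) = angle a b.
Proof. intros. rewrite angle_sym, angle_scale_l, angle_sym; auto. Qed.

Lemma angle0_cross a b : a <> z0 -> b <> z0 -> angle a b = 0 -> cross a b = 0.
Proof.
  intros Ha Hb H. pose proof (vnorm_pos a Ha). pose proof (vnorm_pos b Hb).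
  assert (P: 0 < vnorm a * vnorm b) by nra.
  pose proof (ratio_bound a b Ha Hb) as Hr. unfold angle in H.
  assert (cos (acos (dot a b / (vnorm a * vnorm b))) = 1) by (rewrite H; apply cos_0).
  rewrite cos_acos in H2 by auto.
  assert (dot a b = vnorm a * vnorm b).
  { unfold Rdiv in H2. apply (f_equal (fun x => x * (vnorm a * vnorm b))) in H2.
    rewrite Rmult_assoc, Rinv_l in H2 by lra. lra. }
  pose proof (lagrange a b). pose proof (vnorm_sq a). pose proof (vnorm_sq b).
  assert (cross a b * cross a b = 0) by nra. nra.
Qed.

Lemma cross_nz a b t : a <> z0 -> b <> z0 -> 0 <= t <= PI/2 -> angle a b <= t -> angle a b <> 0 -> cross a b <> 0.
Proof.
  intros Ha Hb Ht H1 H2 Hc. apply H2. pose proof PI_RGT_0.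
  apply angle_le_iff in H1; auto; [|lra].
  assert (Hct: 0 <= cos t) by (apply cos_ge_0; lra).
  pose proof (vnorm_pos a Ha). pose proof (vnorm_pos b Hb).
  assert (P: 0 < vnorm a * vnorm b) by nra.
  pose proof (lagrange a b) as HL. pose proof (vnorm_sq a). pose proof (vnorm_sq b).
  rewrite Hc in HL.
  assert (Hd0: 0 <= dot a b) by nra.
  assert (Hsq: dot a b * dot a b = (vnorm a * vnorm b) * (vnorm a * vnorm b)) by nra.
  assert (HE: dot a b = vnorm a * vnorm b) by nra.
  unfold angle. rewrite HE. unfold Rdiv. rewrite Rinv_r by lra. apply acos_1.
Qed.
Lemma sq_mono_aux a b : 0 <= b -> a*a <= b*b -> a <= b.
Proof. intros. nra. Qed.
Lemma infl_step A B y0 y2 : 0 < A -> 0 < B -> 0 <= y0*y2 ->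
  y2*y2*(A*A) <= y0*y0*(B*B) -> y2*y2*A <= y0*y2*B.
Proof.
  intros HA HB Hy H.
  destruct (Rle_dec 0 y0); destruct (Rle_dec 0 y2).
  - assert (y2*A <= y0*B) by (apply sq_mono_aux; nra). nra.
  - assert (y0 = 0 \/ y2 = 0) by nra. destruct H0; subst; nra.
  - assert (y0 = 0 \/ y2 = 0) by nra. destruct H0; subst; nra.
  - assert (-y2*A <= -y0*B) by (apply sq_mono_aux; nra). nra.
Qed.
Lemma infl_hom c A B x0 y0 x2 y2 : 0 <= c -> 0 < A -> 0 < B ->
  x0*x0+y0*y0 = A*A -> x2*x2+y2*y2 = B*B -> c*A <= x0 -> c*B <= x2 -> 0 <= y0*y2 ->
  c*A*B <= x0*x2+y0*y2.
Proof.
  intros Hc HA HB H0 H2 Hx0 Hx2 Hy.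
  assert (x0 <= A) by nra. assert (x2 <= B) by nra.
  assert (0 <= x0) by nra. assert (0 <= x2) by nra.
  destruct (Rle_dec (x0*B) (x2*A)) as [Hle|Hle].
  - assert (x0*B*(x0*B) <= x2*A*(x2*A)) by (apply Rmult_le_compat; nra).
    assert (y2*y2*(A*A) <= y0*y0*(B*B)) by nra.
    assert (y2*y2*A <= y0*y2*B) by (apply infl_step; auto).
    assert ((x0*x2+y0*y2)*B >= c*A*B*B).
    { assert (c*A*B*B <= x0*B*B) by nra.
      assert (0 <= (B-x2)*(A*(B+x2) - x0*B)) by (apply Rmult_le_pos; nra).
      assert (x0*B*B <= x0*x2*B + y2*y2*A) by nra. nra. }
    nra.
  - assert (x2*A*(x2*A) <= x0*B*(x0*B)) by (apply Rmult_le_compat; nra).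
    assert (y0*y0*(B*B) <= y2*y2*(A*A)) by nra.
    assert (y0*y0*B <= y0*y2*A) by (rewrite (Rmult_comm y0 y2); apply infl_step; nra).
    assert ((x0*x2+y0*y2)*A >= c*A*B*A).
    { assert (c*A*B*A <= x2*A*A) by nra.
      assert (0 <= (A-x0)*(B*(A+x0) - x2*A)) by (apply Rmult_le_pos; nra).
      assert (x2*A*A <= x0*x2*A + y0*y0*B) by nra. nra. }
    nra.
Qed.

Lemma cos_bounds t : 0 <= t <= PI/2 -> 0 <= cos t <= 1.
Proof. intros. pose proof PI_RGT_0. split. apply cos_ge_0; lra. apply COS_bound. Qed.

Lemma ang_self t x : x <> z0 -> 0 <= t <= PI/2 -> angle x x <= t.
Proof.
  intros Hx Ht. pose proof PI_RGT_0. apply angle_le_iff; auto; try lra.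
  pose proof (cos_bounds t Ht). rewrite vnorm_sq. pose proof (dot_self_ge0 x). nra.
Qed.

Lemma ang_add t z w1 w2 : 0 <= t <= PI/2 -> z <> z0 -> w1 <> z0 -> w2 <> z0 -> vadd w1 w2 <> z0 ->
  angle w1 z <= t -> angle w2 z <= t -> angle (vadd w1 w2) z <= t.
Proof.
  intros Ht Hz H1 H2 H12 A1 A2. pose proof PI_RGT_0.
  apply angle_le_iff in A1; auto; try lra. apply angle_le_iff in A2; auto; try lra.
  apply angle_le_iff; auto; try lra.
  pose proof (cos_bounds t Ht). pose proof (triangle w1 w2). pose proof (vnorm_ge0 z).
  replace (dot (vadd w1 w2) z) with (dot w1 z + dot w2 z) by (unfold dot, vadd; simpl; ring).
  assert (cos t * vnorm (vadd w1 w2) * vnorm z <= cos t * (vnorm w1 + vnorm w2) * vnorm z).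
  { apply Rmult_le_compat_r; auto. apply Rmult_le_compat_l; lra. }
  nra.
Qed.

Lemma ang_infl t e0 e1 e2 : 0 <= t <= PI/2 -> e0 <> z0 -> e1 <> z0 -> e2 <> z0 ->
  angle e0 e1 <= t -> angle e1 e2 <= t -> cross e0 e1 * cross e1 e2 < 0 -> angle e0 e2 <= t.
Proof.
  intros Ht H0 H1 H2 A1 A2 Hx. pose proof PI_RGT_0.
  apply angle_le_iff in A1; auto; try lra. apply angle_le_iff in A2; auto; try lra.
  apply angle_le_iff; auto; try lra.
  pose proof (cos_bounds t Ht).
  pose proof (vnorm_pos _ H0). pose proof (vnorm_pos _ H1). pose proof (vnorm_pos _ H2).
  pose proof (vnorm_sq e0). pose proof (vnorm_sq e1). pose proof (vnorm_sq e2).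
  assert (K := infl_hom (cos t) (vnorm e0 * vnorm e1) (vnorm e2 * vnorm e1)
     (dot e0 e1) (cross e1 e0) (dot e2 e1) (cross e1 e2)).
  assert (E1: dot e0 e1 * dot e0 e1 + cross e1 e0 * cross e1 e0 = vnorm e0 * vnorm e1 * (vnorm e0 * vnorm e1)).
  { transitivity (dot e0 e0 * dot e1 e1). unfold dot, cross; ring. rewrite <- H7, <- H8. ring. }
  assert (E2: dot e2 e1 * dot e2 e1 + cross e1 e2 * cross e1 e2 = vnorm e2 * vnorm e1 * (vnorm e2 * vnorm e1)).
  { transitivity (dot e2 e2 * dot e1 e1). unfold dot, cross; ring. rewrite <- H9, <- H8. ring. }
  assert (Y: 0 <= cross e1 e0 * cross e1 e2).
  { replace (cross e1 e0) with (- cross e0 e1) by (unfold cross; ring). lra. }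
  assert (X0: cos t * (vnorm e0 * vnorm e1) <= dot e0 e1) by lra.
  assert (X2: cos t * (vnorm e2 * vnorm e1) <= dot e2 e1) by (unfold dot in *; simpl in *; nra).
  specialize (K ltac:(lra) ltac:(nra) ltac:(nra) E1 E2 X0 X2 Y).
  replace (dot e0 e1 * dot e2 e1 + cross e1 e0 * cross e1 e2) with (dot e0 e2 * dot e1 e1) in K
    by (unfold dot, cross; ring).
  rewrite <- H8 in K.
  assert (0 < vnorm e1 * vnorm e1) by nra.
  apply (Rmult_le_reg_r (vnorm e1 * vnorm e1)); auto. nra.
Qed.

Definition infl (e0 e1 e2 : pt) : Prop := cross e0 e1 * cross e1 e2 < 0.
Definition DE t l n (E : nat -> pt) : Prop :=
  (forall j, (j < n)%nat -> E j <> z0) /\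
  (forall j, (S j < n)%nat -> angle (E j) (E (S j)) <= t) /\
  (forall j, (S j < n)%nat -> ~ (vnorm (E j) < l /\ vnorm (E (S j)) < l)) /\
  (forall j, (S (S j) < n)%nat -> vnorm (E (S j)) < l -> ~ infl (E j) (E (S j)) (E (S (S j))) ->
      angle (E j) (E (S (S j))) <= t).
Definition NZ n (E : nat -> pt) : Prop :=
  forall j, (S j < n)%nat -> angle (E j) (E (S j)) <> 0.

Lemma vsub_z0 a b : vsub a b = z0 <-> a = b.
Proof.
  destruct a as [a1 a2], b as [b1 b2]; unfold vsub, z0; simpl; split; intro H.
  - injection H; intros; f_equal; lra.
  - injection H; intros; subst; f_equal; ring.
Qed.

Lemma infl_iff P j : inflection P j <-> infl (edge_vec P j) (edge_vec P (S j)) (edge_vec P (S (S j))).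
Proof.
  unfold inflection, infl.
  assert (cross (edge_vec P (S j)) (vsub (vtx P j) (vtx P (S j))) *
   cross (edge_vec P (S j)) (vsub (vtx P (S (S (S j)))) (vtx P (S j))) =
   cross (edge_vec P j) (edge_vec P (S j)) * cross (edge_vec P (S j)) (edge_vec P (S (S j)))) as ->.
  { unfold edge_vec, cross, vsub; simpl. ring. }
  tauto.
Qed.

Lemma dcc_DE t l P : dcc_path t l P <-> P <> nil /\ DE t l (pred (length P)) (edge_vec P).
Proof.
  unfold dcc_path, DE. split.
  - intros (H0 & H1 & H2 & H3 & H4). split; auto. split; [|split; [|split]].
    + intros j Hj Hz. unfold edge_vec in Hz. apply (proj1 (vsub_z0 _ _)) in Hz. apply (H1 j); [lia|auto].
    + intros j Hj. apply H2. lia.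
    + intros j Hj. apply H3. lia.
    + intros j Hj Hs Hi. apply H4; auto; [lia|]. rewrite infl_iff. auto.
  - intros (H0 & H1 & H2 & H3 & H4). split; auto. split; [|split; [|split]].
    + intros j Hj Hz. apply (H1 j); [lia|]. apply (proj2 (vsub_z0 _ _)). auto.
    + intros j Hj. apply H2. lia.
    + intros j Hj. apply H3. lia.
    + intros j Hj Hs Hi. apply H4; auto; [lia|]. rewrite <- infl_iff. auto.
Qed.

Lemma nzt_NZ P : nonzero_turns P <-> NZ (pred (length P)) (edge_vec P).
Proof. unfold nonzero_turns, NZ, turn. split; intros H j Hj; apply H; lia. Qed.

Fixpoint sumR (f : nat -> R) (n : nat) : R :=
  match n with O => 0 | S n => sumR f n + f n end.

Lemma fold_sumR f n : fold_right Rplus 0 (map f (seq 0 n)) = sumR f n.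
Proof.
  induction n; [simpl; auto|].
  rewrite seq_S, map_app, fold_right_app. simpl.
  simpl sumR. rewrite <- IHn. clear IHn.
  generalize (f n). intro r. generalize (map f (seq 0 n)).
  induction l; simpl; intros. ring. rewrite IHl. ring.
Qed.

Lemma path_length_sum P : path_length P = sumR (fun j => vnorm (edge_vec P j)) (pred (length P)).
Proof. unfold path_length. rewrite fold_sumR. reflexivity. Qed.

Lemma sumR_ext f g n : (forall j, (j < n)%nat -> f j = g j) -> sumR f n = sumR g n.
Proof. induction n; simpl; intros; auto. rewrite IHn, H; auto. Qed.

Lemma DE_ext t l n E F : (forall j, (j < n)%nat -> E j = F j) -> DE t l n E -> DE t l n F.
Proof.
  intros Hx (H1 & H2 & H3 & H4). split; [|split; [|split]].
  - intros j Hj. rewrite <- Hx by lia. auto.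
  - intros j Hj. rewrite <- !Hx by lia. auto.
  - intros j Hj. rewrite <- !Hx by lia. auto.
  - intros j Hj. rewrite <- !Hx by lia. auto.
Qed.
Lemma NZ_ext n E F : (forall j, (j < n)%nat -> E j = F j) -> NZ n E -> NZ n F.
Proof. intros Hx H j Hj. rewrite <- !Hx by lia. auto. Qed.

Lemma shortcut t l n E j : 0 <= t <= PI/2 -> DE t l n E -> (S (S j) < n)%nat -> vnorm (E (S j)) < l ->
  angle (E j) (E (S (S j))) <= t.
Proof.
  intros Ht (H1 & H2 & H3 & H4) Hj Hs.
  destruct (Rlt_dec (cross (E j) (E (S j)) * cross (E (S j)) (E (S (S j)))) 0) as [Hi|Hi].
  - apply ang_infl with (E (S j)); auto; try (apply H1; lia); apply H2; lia.
  - apply H4; auto.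
Qed.

Lemma nz_scale k a : 0 < k -> a <> z0 -> scale k a <> z0.
Proof.
  intros Hk Ha H. apply Ha. destruct a as [x y]; unfold scale, z0 in *; simpl in *.
  injection H; intros. f_equal; nra.
Qed.
Lemma dot_ge0_ang t a b : 0 <= t <= PI/2 -> a <> z0 -> b <> z0 -> angle a b <= t -> 0 <= dot a b.
Proof.
  intros Ht Ha Hb H. pose proof PI_RGT_0. apply angle_le_iff in H; auto; try lra.
  pose proof (cos_bounds t Ht). pose proof (vnorm_ge0 a). pose proof (vnorm_ge0 b).
  assert (0 <= vnorm a * vnorm b) by nra. nra.
Qed.
Lemma nz_of_dot a w : 0 < dot a w -> w <> z0.
Proof. intros H Hw. subst. unfold dot, z0 in H. simpl in H. lra. Qed.
Lemma nz_add a b s : a <> z0 -> 0 <= dot a b -> 0 < s -> vadd b (scale s a) <> z0.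
Proof.
  intros Ha Hd Hs. apply (nz_of_dot a). pose proof (dot_pos a Ha).
  replace (dot a (vadd b (scale s a))) with (dot a b + s * dot a a) by (unfold dot, vadd, scale; simpl; ring).
  nra.
Qed.
Lemma nz_add2 a b : a <> z0 -> 0 <= dot a b -> vadd a b <> z0.
Proof.
  intros Ha Hd. apply (nz_of_dot a). pose proof (dot_pos a Ha).
  replace (dot a (vadd a b)) with (dot a a + dot a b) by (unfold dot, vadd; simpl; ring). lra.
Qed.
Lemma vnorm_scale' k a : 0 <= k -> vnorm (scale k a) = k * vnorm a.
Proof. apply vnorm_scale. Qed.

Lemma ang_add_scale t z w1 w2 s : 0 <= t <= PI/2 -> z <> z0 -> w1 <> z0 -> w2 <> z0 -> 0 < s ->
  vadd w1 (scale s w2) <> z0 -> angle w1 z <= t -> angle w2 z <= t -> angle (vadd w1 (scale s w2)) z <= t.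
Proof.
  intros. apply ang_add; auto. apply nz_scale; auto. rewrite angle_scale_l; auto.
Qed.

Definition mB (s : R) (m : nat) (E : nat -> pt) (j : nat) : pt :=
  if Nat.eq_dec j m then scale (1 - s) (E m)
  else if Nat.eq_dec j (S m) then vadd (E (S m)) (scale s (E m)) else E j.

Lemma DE_B t l n E m s : 0 <= t <= PI/2 -> DE t l n E -> (S m < n)%nat -> 0 < s < 1 ->
  l < (1 - s) * vnorm (E m) -> vnorm (E (S m)) < l -> DE t l n (mB s m E).
Proof.
  intros Ht HD Hm Hs Hlong Hshort.
  pose proof HD as (H1 & H2 & H3 & H4).
  assert (N0 : E m <> z0) by (apply H1; lia).
  assert (N1 : E (S m) <> z0) by (apply H1; lia).
  assert (T : angle (E m) (E (S m)) <= t) by (apply H2; lia).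
  assert (D : 0 <= dot (E m) (E (S m))) by (apply (dot_ge0_ang t); auto).
  assert (NB : vadd (E (S m)) (scale s (E m)) <> z0) by (apply nz_add; auto; lra).
  assert (NS : scale (1 - s) (E m) <> z0) by (apply nz_scale; auto; lra).
  assert (NS' : scale s (E m) <> z0) by (apply nz_scale; auto; lra).
  assert (L0 : l < vnorm (scale (1 - s) (E m))) by (rewrite vnorm_scale; lra).
  split; [|split; [|split]].
  - intros j Hj. unfold mB. destruct (Nat.eq_dec j m); [auto|].
    destruct (Nat.eq_dec j (S m)); [auto|]. apply H1; auto.
  - intros j Hj. unfold mB.
    destruct (Nat.eq_dec j m); destruct (Nat.eq_dec j (S m)); destruct (Nat.eq_dec (S j) m);
      destruct (Nat.eq_dec (S j) (S m)); try lia; subst.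
    + rewrite angle_scale_l by (auto; lra). rewrite angle_sym.
      apply ang_add_scale; auto; try lra. rewrite angle_sym; auto. apply ang_self; auto.
    + apply ang_add_scale; auto; try lra;
      first [apply H1; lia | apply H2; lia | apply (shortcut t l n E m); auto; lia].
    + rewrite angle_scale_r by (auto; try lra; apply H1; lia). apply H2; lia.
    + apply H2; lia.
  - intros j Hj [Ha Hb]. unfold mB in Ha, Hb.
    destruct (Nat.eq_dec j m); destruct (Nat.eq_dec j (S m)); destruct (Nat.eq_dec (S j) m);
      destruct (Nat.eq_dec (S j) (S m)); try lia; subst; try lra.
    + apply (H3 (S m)); auto.
    + apply (H3 j); auto.
  - intros j Hj Hsh Hinf. unfold mB in *.
    destruct (Nat.eq_dec j m); destruct (Nat.eq_dec j (S m)); destruct (Nat.eq_dec (S j) m);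
      destruct (Nat.eq_dec (S j) (S m)); destruct (Nat.eq_dec (S (S j)) m);
      destruct (Nat.eq_dec (S (S j)) (S m)); try lia; subst; try lra.
    + rewrite angle_scale_l by (auto; try lra; apply H1; lia).
      apply (shortcut t l n E m); auto; lia.
    + exfalso. apply (H3 (S m)); [lia|]. auto.
    + rewrite angle_scale_r by (auto; try lra; apply H1; lia).
      apply (shortcut t l n E j); auto; lia.
    + apply H4; auto.
Qed.

Lemma ang_nz a b : a <> z0 -> b <> z0 -> cross a b <> 0 -> angle a b <> 0.
Proof. intros Ha Hb Hc H. apply Hc. apply angle0_cross; auto. Qed.

Lemma NZ_cross t l n E j : 0 <= t <= PI/2 -> DE t l n E -> NZ n E -> (S j < n)%nat -> cross (E j) (E (S j)) <> 0.
Proof.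
  intros Ht (H1 & H2 & H3 & H4) HN Hj. apply (cross_nz _ _ t); auto; try (apply H1; lia); apply H2; auto. 
Qed.

Lemma NZ_B t l n E m s : 0 <= t <= PI/2 -> DE t l n E -> NZ n E -> (S m < n)%nat -> 0 < s < 1 ->
  ((S (S m) < n)%nat -> s * Rabs (cross (E m) (E (S (S m)))) < Rabs (cross (E (S m)) (E (S (S m))))) ->
  NZ n (mB s m E).
Proof.
  intros Ht HD HN Hm Hs Hsmall.
  pose proof HD as (H1 & H2 & H3 & H4).
  assert (N0 : E m <> z0) by (apply H1; lia).
  assert (N1 : E (S m) <> z0) by (apply H1; lia).
  assert (T : angle (E m) (E (S m)) <= t) by (apply H2; lia).
  assert (D : 0 <= dot (E m) (E (S m))) by (apply (dot_ge0_ang t); auto).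
  assert (NB : vadd (E (S m)) (scale s (E m)) <> z0) by (apply nz_add; auto; lra).
  assert (NS : scale (1 - s) (E m) <> z0) by (apply nz_scale; auto; lra).
  assert (C01 : cross (E m) (E (S m)) <> 0) by (apply (NZ_cross t l n); auto).
  intros j Hj. unfold mB.
  destruct (Nat.eq_dec j m); destruct (Nat.eq_dec j (S m)); destruct (Nat.eq_dec (S j) m);
    destruct (Nat.eq_dec (S j) (S m)); try lia; subst.
  - apply ang_nz; auto.
    replace (cross (scale (1 - s) (E m)) (vadd (E (S m)) (scale s (E m)))) with
      ((1 - s) * cross (E m) (E (S m))) by (unfold cross, scale, vadd; simpl; ring).
    intro Hz. apply Rmult_integral in Hz. destruct Hz; lra.
  - specialize (Hsmall Hj).
    assert (C12 : cross (E (S m)) (E (S (S m))) <> 0) by (apply (NZ_cross t l n); auto).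
    apply ang_nz; [auto|apply H1; lia|].
    replace (cross (vadd (E (S m)) (scale s (E m))) (E (S (S m)))) with
      (cross (E (S m)) (E (S (S m))) + s * cross (E m) (E (S (S m)))) by (unfold cross, scale, vadd; simpl; ring).
    intro Hz. assert (cross (E (S m)) (E (S (S m))) = - (s * cross (E m) (E (S (S m))))) by lra.
    rewrite H in Hsmall. rewrite Rabs_Ropp, Rabs_mult, (Rabs_right s) in Hsmall by lra. lra.
  - rewrite angle_scale_r; auto; try lra; first [apply HN; lia | apply H1; lia].
  - apply HN; lia.
Qed.

Lemma sum_local2 f g m n : (forall j, j <> m -> j <> S m -> g j = f j) -> (S m < n)%nat ->
  sumR g n = sumR f n + (g m + g (S m) - f m - f (S m)).
Proof.
  intros Hx Hn. induction n as [|N IH]; [lia|].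
  destruct (Nat.eq_dec N (S m)).
  - subst. simpl. rewrite (sumR_ext g f m). ring. intros j Hj; apply Hx; lia.
  - simpl. rewrite IH by lia. rewrite (Hx N) by lia. ring.
Qed.

Lemma sum_local3 f g m n :
  (forall j, (j < m)%nat -> g j = f j) -> (forall j, (S (S m) < j)%nat -> g j = f (pred j)) -> (S m < n)%nat ->
  sumR g (S n) = sumR f n + (g m + g (S m) + g (S (S m)) - f m - f (S m)).
Proof.
  intros Hx Hy Hn. induction n as [|N IH]; [lia|].
  destruct (Nat.eq_dec N (S m)).
  - subst. simpl. rewrite (sumR_ext g f m) by auto. ring.
  - replace (sumR g (S (S N))) with (sumR g (S N) + g (S N)) by reflexivity.
    rewrite IH by lia. rewrite (Hy (S N)) by lia. simpl. ring.
Qed.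

Lemma len_B n E m s : (S m < n)%nat -> 0 < s < 1 -> E m <> z0 -> cross (E m) (E (S m)) <> 0 ->
  sumR (fun j => vnorm (mB s m E j)) n < sumR (fun j => vnorm (E j)) n.
Proof.
  intros Hn Hs H0 Hc.
  rewrite (sum_local2 (fun j => vnorm (E j)) (fun j => vnorm (mB s m E j)) m n); auto.
  - unfold mB. destruct (Nat.eq_dec m m); [|lia]. destruct (Nat.eq_dec (S m) m); [lia|].
    destruct (Nat.eq_dec (S m) (S m)); [|lia].
    rewrite vnorm_scale by lra.
    assert (vnorm (vadd (E (S m)) (scale s (E m))) < vnorm (E (S m)) + vnorm (scale s (E m))).
    { apply triangle_strict. replace (cross (E (S m)) (scale s (E m))) with (- s * cross (E m) (E (S m)))
        by (unfold cross, scale; simpl; ring). intro Hz. apply Rmult_integral in Hz. destruct Hz; lra. }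
    rewrite vnorm_scale in H by lra. lra.
  - intros j Hj1 Hj2. unfold mB. destruct (Nat.eq_dec j m); [lia|]. destruct (Nat.eq_dec j (S m)); [lia|]. auto.
Qed.

Definition mC (s : R) (m : nat) (E : nat -> pt) (j : nat) : pt :=
  if Nat.eq_dec j m then vadd (E m) (scale s (E (S m)))
  else if Nat.eq_dec j (S m) then scale (1 - s) (E (S m)) else E j.

Lemma DE_C t l n E m s : 0 <= t <= PI/2 -> DE t l n E -> (S m < n)%nat -> 0 < s < 1 ->
  l < (1 - s) * vnorm (E (S m)) -> vnorm (E m) < l -> DE t l n (mC s m E).
Proof.
  intros Ht HD Hm Hs Hlong Hshort.
  pose proof HD as (H1 & H2 & H3 & H4).
  assert (N0 : E m <> z0) by (apply H1; lia).
  assert (N1 : E (S m) <> z0) by (apply H1; lia).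
  assert (T : angle (E m) (E (S m)) <= t) by (apply H2; lia).
  assert (D : 0 <= dot (E (S m)) (E m)) by (replace (dot (E (S m)) (E m)) with (dot (E m) (E (S m))) by (unfold dot; ring); apply (dot_ge0_ang t); auto).
  assert (NB : vadd (E m) (scale s (E (S m))) <> z0) by (apply nz_add; auto; lra).
  assert (NS : scale (1 - s) (E (S m)) <> z0) by (apply nz_scale; auto; lra).
  assert (L0 : l < vnorm (scale (1 - s) (E (S m)))) by (rewrite vnorm_scale; lra).
  split; [|split; [|split]].
  - intros j Hj. unfold mC. destruct (Nat.eq_dec j m); [auto|].
    destruct (Nat.eq_dec j (S m)); [auto|]. apply H1; auto.
  - intros j Hj. unfold mC.
    destruct (Nat.eq_dec j m); destruct (Nat.eq_dec j (S m)); destruct (Nat.eq_dec (S j) m);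
      destruct (Nat.eq_dec (S j) (S m)); try lia; subst.
    + rewrite angle_scale_r by (auto; lra).
      apply ang_add_scale; auto; try lra. apply ang_self; auto.
    + rewrite angle_scale_l by (auto; lra). apply H2; lia.
    + rewrite angle_sym. apply ang_add_scale; auto; try lra; try (apply H1; lia).
      * rewrite angle_sym. apply H2; lia.
      * rewrite angle_sym. apply (shortcut t l n E j); auto; lia.
    + apply H2; lia.
  - intros j Hj [Ha Hb]. unfold mC in Ha, Hb.
    destruct (Nat.eq_dec j m); destruct (Nat.eq_dec j (S m)); destruct (Nat.eq_dec (S j) m);
      destruct (Nat.eq_dec (S j) (S m)); try lia; subst; try lra.
    + apply (H3 j); auto.
    + apply (H3 j); auto.
  - intros j Hj Hsh Hinf. unfold mC in *.
    destruct (Nat.eq_dec j m); destruct (Nat.eq_dec j (S m)); destruct (Nat.eq_dec (S j) m);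
      destruct (Nat.eq_dec (S j) (S m)); destruct (Nat.eq_dec (S (S j)) m);
      destruct (Nat.eq_dec (S (S j)) (S m)); try lia; subst; try lra.
    + rewrite angle_scale_l by (auto; try lra; apply H1; lia).
      apply (shortcut t l n E (S m)); auto; lia.
    + rewrite angle_scale_r by (auto; try lra; apply H1; lia).
      apply (shortcut t l n E j); auto; lia.
    + exfalso. apply (H3 (S j)); [lia|]. auto.
    + apply H4; auto.
Qed.

Lemma NZ_C t l n E m s : 0 <= t <= PI/2 -> DE t l n E -> NZ n E -> (S m < n)%nat -> 0 < s < 1 ->
  (forall m', m = S m' -> s * Rabs (cross (E m') (E (S m))) < Rabs (cross (E m') (E m))) ->
  NZ n (mC s m E).
Proof.
  intros Ht HD HN Hm Hs Hsmall.
  pose proof HD as (H1 & H2 & H3 & H4).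
  assert (N0 : E m <> z0) by (apply H1; lia).
  assert (N1 : E (S m) <> z0) by (apply H1; lia).
  assert (T : angle (E m) (E (S m)) <= t) by (apply H2; lia).
  assert (D : 0 <= dot (E (S m)) (E m)) by (replace (dot (E (S m)) (E m)) with (dot (E m) (E (S m))) by (unfold dot; ring); apply (dot_ge0_ang t); auto).
  assert (NB : vadd (E m) (scale s (E (S m))) <> z0) by (apply nz_add; auto; lra).
  assert (NS : scale (1 - s) (E (S m)) <> z0) by (apply nz_scale; auto; lra).
  assert (C01 : cross (E m) (E (S m)) <> 0) by (apply (NZ_cross t l n); auto).
  intros j Hj. unfold mC.
  destruct (Nat.eq_dec j m); destruct (Nat.eq_dec j (S m)); destruct (Nat.eq_dec (S j) m);
    destruct (Nat.eq_dec (S j) (S m)); try lia; subst.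
  - apply ang_nz; auto.
    replace (cross (vadd (E m) (scale s (E (S m)))) (scale (1 - s) (E (S m)))) with
      ((1 - s) * cross (E m) (E (S m))) by (unfold cross, scale, vadd; simpl; ring).
    intro Hz. apply Rmult_integral in Hz. destruct Hz; lra.
  - rewrite angle_scale_l; auto; try lra; first [apply HN; lia | apply H1; lia].
  - specialize (Hsmall j eq_refl).
    assert (C12 : cross (E j) (E (S j)) <> 0) by (apply (NZ_cross t l n); auto; lia).
    apply ang_nz; [apply H1; lia|auto|].
    replace (cross (E j) (vadd (E (S j)) (scale s (E (S (S j)))))) with
      (cross (E j) (E (S j)) + s * cross (E j) (E (S (S j)))) by (unfold cross, scale, vadd; simpl; ring).
    intro Hz. assert (HH: cross (E j) (E (S j)) = - (s * cross (E j) (E (S (S j))))) by lra.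
    rewrite HH in Hsmall. rewrite Rabs_Ropp, Rabs_mult, (Rabs_right s) in Hsmall by lra. lra.
  - apply HN; lia.
Qed.

Lemma len_C n E m s : (S m < n)%nat -> 0 < s < 1 -> E (S m) <> z0 -> cross (E m) (E (S m)) <> 0 ->
  sumR (fun j => vnorm (mC s m E j)) n < sumR (fun j => vnorm (E j)) n.
Proof.
  intros Hn Hs H0 Hc.
  rewrite (sum_local2 (fun j => vnorm (E j)) (fun j => vnorm (mC s m E j)) m n); auto.
  - unfold mC. destruct (Nat.eq_dec m m); [|lia]. destruct (Nat.eq_dec (S m) m); [lia|].
    destruct (Nat.eq_dec (S m) (S m)); [|lia].
    rewrite vnorm_scale by lra.
    assert (vnorm (vadd (E m) (scale s (E (S m)))) < vnorm (E m) + vnorm (scale s (E (S m)))).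
    { apply triangle_strict. replace (cross (E m) (scale s (E (S m)))) with (s * cross (E m) (E (S m)))
        by (unfold cross, scale; simpl; ring). intro Hz. apply Rmult_integral in Hz. destruct Hz; lra. }
    rewrite vnorm_scale in H by lra. lra.
  - intros j Hj1 Hj2. unfold mC. destruct (Nat.eq_dec j m); [lia|]. destruct (Nat.eq_dec j (S m)); [lia|]. auto.
Qed.

Definition mA (s : R) (m : nat) (E : nat -> pt) (j : nat) : pt :=
  if lt_dec j m then E j
  else if Nat.eq_dec j m then scale (1 - s) (E m)
  else if Nat.eq_dec j (S m) then scale s (vadd (E m) (E (S m)))
  else if Nat.eq_dec j (S (S m)) then scale (1 - s) (E (S m))
  else E (pred j).

Ltac dA x m := destruct (lt_dec x m); [|destruct (Nat.eq_dec x m); [|destruct (Nat.eq_dec x (S m)); [|destruct (Nat.eq_dec x (S (S m)))]]].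

Lemma DE_A t l n E m s : 0 <= t <= PI/2 -> DE t l n E -> (S m < n)%nat -> 0 < s < 1 ->
  l < (1 - s) * vnorm (E m) -> l < (1 - s) * vnorm (E (S m)) -> DE t l (S n) (mA s m E).
Proof.
  intros Ht HD Hm Hs Hl0 Hl1.
  pose proof HD as (H1 & H2 & H3 & H4).
  assert (N0 : E m <> z0) by (apply H1; lia).
  assert (N1 : E (S m) <> z0) by (apply H1; lia).
  assert (T : angle (E m) (E (S m)) <= t) by (apply H2; lia).
  assert (D : 0 <= dot (E m) (E (S m))) by (apply (dot_ge0_ang t); auto).
  assert (NV : vadd (E m) (E (S m)) <> z0) by (apply nz_add2; auto).
  assert (NM : scale s (vadd (E m) (E (S m))) <> z0) by (apply nz_scale; auto; lra).
  assert (NS0 : scale (1 - s) (E m) <> z0) by (apply nz_scale; auto; lra).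
  assert (NS1 : scale (1 - s) (E (S m)) <> z0) by (apply nz_scale; auto; lra).
  assert (L0 : l < vnorm (scale (1 - s) (E m))) by (rewrite vnorm_scale; lra).
  assert (L1 : l < vnorm (scale (1 - s) (E (S m)))) by (rewrite vnorm_scale; lra).
  split; [|split; [|split]].
  - intros j Hj. unfold mA. dA j m; auto; apply H1; lia.
  - intros j Hj. unfold mA. dA j m; dA (S j) m; try lia; subst; simpl pred.
    + apply H2; lia.
    + rewrite angle_scale_r by (auto; try lra; apply H1; lia). apply H2; lia.
    + rewrite angle_scale_l, angle_scale_r by (auto; lra). rewrite angle_sym.
      apply ang_add; auto. apply ang_self; auto. rewrite angle_sym; auto.
    + rewrite angle_scale_l, angle_scale_r by (auto; lra).
      apply ang_add; auto. apply ang_self; auto.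
    + rewrite angle_scale_l by (auto; try lra; apply H1; lia). apply H2; lia.
    + destruct j as [|j']; [lia|]. simpl. apply H2; lia.
  - intros j Hj [Ha Hb]. unfold mA in Ha, Hb. dA j m; dA (S j) m; try lia; subst; simpl pred in *; try lra.
    + apply (H3 j); auto; lia.
    + destruct j as [|j']; [lia|]. simpl in *. apply (H3 j'); auto; lia.
  - intros j Hj Hsh Hinf. unfold mA in *. dA j m; dA (S j) m; dA (S (S j)) m; try lia; subst;
      simpl pred in *; try lra.
    + apply H4; auto; lia.
    + rewrite angle_scale_r by (auto; try lra; apply H1; lia).
      apply (shortcut t l n E j); auto; lia.
    + rewrite angle_scale_l, angle_scale_r by (auto; lra). auto.
    + rewrite angle_scale_l by (auto; try lra; apply H1; lia).
      apply (shortcut t l n E (S m)); auto; lia.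
    + destruct j as [|j']; [lia|]. simpl in *.
      apply (shortcut t l n E j'); auto; lia.
Qed.

Lemma NZ_A t l n E m s : 0 <= t <= PI/2 -> DE t l n E -> NZ n E -> (S m < n)%nat -> 0 < s < 1 ->
  NZ (S n) (mA s m E).
Proof.
  intros Ht HD HN Hm Hs.
  pose proof HD as (H1 & H2 & H3 & H4).
  assert (N0 : E m <> z0) by (apply H1; lia).
  assert (N1 : E (S m) <> z0) by (apply H1; lia).
  assert (T : angle (E m) (E (S m)) <= t) by (apply H2; lia).
  assert (D : 0 <= dot (E m) (E (S m))) by (apply (dot_ge0_ang t); auto).
  assert (NV : vadd (E m) (E (S m)) <> z0) by (apply nz_add2; auto).
  assert (NM : scale s (vadd (E m) (E (S m))) <> z0) by (apply nz_scale; auto; lra).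
  assert (NS0 : scale (1 - s) (E m) <> z0) by (apply nz_scale; auto; lra).
  assert (NS1 : scale (1 - s) (E (S m)) <> z0) by (apply nz_scale; auto; lra).
  assert (C01 : cross (E m) (E (S m)) <> 0) by (apply (NZ_cross t l n); auto).
  assert (Q : s * (1 - s) <> 0) by (apply Rmult_integral_contrapositive; split; lra).
  intros j Hj. unfold mA. dA j m; dA (S j) m; try lia; subst; simpl pred.
  - apply HN; lia.
  - rewrite angle_scale_r by (auto; try lra; apply H1; lia). apply HN; lia.
  - apply ang_nz; auto.
    replace (cross (scale (1 - s) (E m)) (scale s (vadd (E m) (E (S m))))) with
      (s * (1 - s) * cross (E m) (E (S m))) by (unfold cross, scale, vadd; simpl; ring).
    apply Rmult_integral_contrapositive; split; auto.
  - apply ang_nz; auto.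
    replace (cross (scale s (vadd (E m) (E (S m)))) (scale (1 - s) (E (S m)))) with
      (s * (1 - s) * cross (E m) (E (S m))) by (unfold cross, scale, vadd; simpl; ring).
    apply Rmult_integral_contrapositive; split; auto.
  - rewrite angle_scale_l by (auto; try lra; apply H1; lia). apply HN; lia.
  - destruct j as [|j']; [lia|]. simpl. apply HN; lia.
Qed.

Lemma len_A n E m s : (S m < n)%nat -> 0 < s < 1 -> cross (E m) (E (S m)) <> 0 ->
  sumR (fun j => vnorm (mA s m E j)) (S n) < sumR (fun j => vnorm (E j)) n.
Proof.
  intros Hn Hs Hc.
  rewrite (sum_local3 (fun j => vnorm (E j)) (fun j => vnorm (mA s m E j)) m n); auto.
  - unfold mA. dA m m; try lia. dA (S m) m; try lia. dA (S (S m)) m; try lia.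
    rewrite !vnorm_scale by lra.
    assert (vnorm (vadd (E m) (E (S m))) < vnorm (E m) + vnorm (E (S m))) by (apply triangle_strict; auto).
    nra.
  - intros j Hj. unfold mA. dA j m; try lia. auto.
  - intros j Hj. unfold mA. dA j m; try lia. auto.
Qed.

Definition VB (P Q : list pt) (k : nat) (x : pt) : Prop :=
  length Q = length P /\ forall j, vtx Q j = if Nat.eq_dec j k then x else vtx P j.
Definition VA (P Q : list pt) (k : nat) (x y : pt) : Prop :=
  length Q = S (length P) /\ forall j, vtx Q j =
    if lt_dec j k then vtx P j else if Nat.eq_dec j k then x
    else if Nat.eq_dec j (S k) then y else vtx P (pred j).

Lemma VB_cons P Q k x w : VB P Q k x -> VB (w :: P) (w :: Q) (S k) x.
Proof.
  intros [HL H]. split; simpl; [lia|]. intros [|j]; [reflexivity|].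
  unfold vtx in *; simpl. rewrite H. destruct (Nat.eq_dec j k); destruct (Nat.eq_dec (S j) (S k)); auto; lia.
Qed.

Lemma VB_app P Q k x w : VB P Q k x -> (k < length P)%nat -> VB (P ++ w :: nil) (Q ++ w :: nil) k x.
Proof.
  intros [HL H] Hk. split; [rewrite !length_app; simpl; lia|]. intros j. unfold vtx in *.
  destruct (lt_dec j (length P)).
  - rewrite !app_nth1 by lia. apply H.
  - rewrite !app_nth2 by lia. rewrite HL. destruct (Nat.eq_dec j k); [lia|auto].
Qed.

Lemma VA_cons P Q k x y w : VA P Q k x y -> VA (w :: P) (w :: Q) (S k) x y.
Proof.
  intros [HL H]. split; simpl; [lia|]. intros [|j].
  - destruct (lt_dec 0 (S k)); [reflexivity|lia].
  - unfold vtx in *; simpl. rewrite H.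
    destruct (lt_dec j k); destruct (lt_dec (S j) (S k)); try lia; auto.
    destruct (Nat.eq_dec j k); destruct (Nat.eq_dec (S j) (S k)); try lia; auto.
    destruct (Nat.eq_dec j (S k)); destruct (Nat.eq_dec (S j) (S (S k))); try lia; auto.
    destruct j; [lia|]. reflexivity.
Qed.

Lemma VA_app P Q k x y w : VA P Q k x y -> (k < length P)%nat -> VA (P ++ w :: nil) (Q ++ w :: nil) k x y.
Proof.
  intros [HL H] Hk. split; [rewrite !length_app; simpl; lia|]. intros j. unfold vtx in *.
  destruct (lt_dec j (length Q)).
  - rewrite app_nth1 by lia. rewrite H.
    destruct (lt_dec j k). rewrite app_nth1 by lia; auto.
    destruct (Nat.eq_dec j k); auto. destruct (Nat.eq_dec j (S k)); auto.
    rewrite app_nth1 by lia. auto.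
  - rewrite app_nth2 by lia.
    destruct (lt_dec j k); [lia|]. destruct (Nat.eq_dec j k); [lia|]. destruct (Nat.eq_dec j (S k)); [lia|].
    rewrite app_nth2 by lia. rewrite HL. replace (pred j - length P)%nat with (j - S (length P))%nat by lia.
    reflexivity.
Qed.

Lemma VB_edges P Q m s : (S m < length P)%nat ->
  VB P Q (S m) (vadd (vtx P (S m)) (scale s (vsub (vtx P m) (vtx P (S m))))) ->
  forall j, edge_vec Q j = mB s m (edge_vec P) j.
Proof.
  intros Hm [HL H] j. unfold edge_vec, mB. rewrite !H.
  destruct (Nat.eq_dec j m); [subst|].
  - destruct (Nat.eq_dec (S m) (S m)); [|lia]. destruct (Nat.eq_dec m (S m)); [lia|].
    unfold vsub, vadd, scale; simpl. apply injective_projections; simpl; ring.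
  - destruct (Nat.eq_dec j (S m)); [subst|].
    + destruct (Nat.eq_dec (S (S m)) (S m)); [lia|]. destruct (Nat.eq_dec (S m) (S m)); [|lia].
      unfold vsub, vadd, scale; simpl. apply injective_projections; simpl; ring.
    + destruct (Nat.eq_dec (S j) (S m)); [lia|]. destruct (Nat.eq_dec j (S m)); [lia|]. reflexivity.
Qed.

Lemma VC_edges P Q m s : (S (S m) < length P)%nat ->
  VB P Q (S m) (vadd (vtx P (S m)) (scale s (vsub (vtx P (S (S m))) (vtx P (S m))))) ->
  forall j, edge_vec Q j = mC s m (edge_vec P) j.
Proof.
  intros Hm [HL H] j. unfold edge_vec, mC. rewrite !H.
  destruct (Nat.eq_dec j m); [subst|].
  - destruct (Nat.eq_dec (S m) (S m)); [|lia]. destruct (Nat.eq_dec m (S m)); [lia|].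
    unfold vsub, vadd, scale; simpl. apply injective_projections; simpl; ring.
  - destruct (Nat.eq_dec j (S m)); [subst|].
    + destruct (Nat.eq_dec (S (S m)) (S m)); [lia|]. destruct (Nat.eq_dec (S m) (S m)); [|lia].
      unfold vsub, vadd, scale; simpl. apply injective_projections; simpl; ring.
    + destruct (Nat.eq_dec (S j) (S m)); [lia|]. destruct (Nat.eq_dec j (S m)); [lia|]. reflexivity.
Qed.

Lemma VA_edges P Q m s : 
  VA P Q (S m) (vadd (vtx P (S m)) (scale s (vsub (vtx P m) (vtx P (S m)))))
               (vadd (vtx P (S m)) (scale s (vsub (vtx P (S (S m))) (vtx P (S m))))) ->
  forall j, edge_vec Q j = mA s m (edge_vec P) j.
Proof.
  intros [HL H] j. unfold edge_vec, mA. rewrite !H.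
  destruct (lt_dec j m).
  - destruct (lt_dec (S j) (S m)); [|lia]. destruct (lt_dec j (S m)); [|lia]. reflexivity.
  - destruct (Nat.eq_dec j m); [subst|].
    + destruct (lt_dec (S m) (S m)); [lia|]. destruct (Nat.eq_dec (S m) (S m)); [|lia].
      destruct (lt_dec m (S m)); [|lia].
      unfold vsub, vadd, scale; simpl. apply injective_projections; simpl; ring.
    + destruct (Nat.eq_dec j (S m)); [subst|].
      * destruct (lt_dec (S (S m)) (S m)); [lia|]. destruct (Nat.eq_dec (S (S m)) (S m)); [lia|].
        destruct (Nat.eq_dec (S (S m)) (S (S m))); [|lia].
        destruct (lt_dec (S m) (S m)); [lia|]. destruct (Nat.eq_dec (S m) (S m)); [|lia].
        unfold vsub, vadd, scale; simpl. apply injective_projections; simpl; ring.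
      * destruct (Nat.eq_dec j (S (S m))); [subst|].
        -- destruct (lt_dec (S (S (S m))) (S m)); [lia|]. destruct (Nat.eq_dec (S (S (S m))) (S m)); [lia|].
           destruct (Nat.eq_dec (S (S (S m))) (S (S m))); [lia|].
           destruct (lt_dec (S (S m)) (S m)); [lia|]. destruct (Nat.eq_dec (S (S m)) (S m)); [lia|].
           destruct (Nat.eq_dec (S (S m)) (S (S m))); [|lia]. simpl.
           unfold vsub, vadd, scale; simpl. apply injective_projections; simpl; ring.
        -- destruct (lt_dec (S j) (S m)); [lia|]. destruct (Nat.eq_dec (S j) (S m)); [lia|].
           destruct (Nat.eq_dec (S j) (S (S m))); [lia|].
           destruct (lt_dec j (S m)); [lia|]. destruct (Nat.eq_dec j (S m)); [lia|].
           destruct (Nat.eq_dec j (S (S m))); [lia|].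
           destruct j; [lia|]. reflexivity.
Qed.

Lemma VB_build (p : list pt) k x : (k < length p)%nat -> VB p (firstn k p ++ x :: skipn (S k) p) k x.
Proof.
  intros Hk. assert (HF : length (firstn k p) = k) by (rewrite length_firstn; lia).
  split.
  - rewrite length_app, HF. cbn [length]. rewrite length_skipn. lia.
  - intros j. unfold vtx. destruct (lt_dec j k).
    + rewrite app_nth1 by lia. rewrite nth_firstn. destruct (Nat.eq_dec j k); [lia|].
      replace (j <? k)%nat with true by (symmetry; apply Nat.ltb_lt; lia). reflexivity.
    + rewrite app_nth2 by lia. rewrite HF. destruct (Nat.eq_dec j k).
      * subst. rewrite Nat.sub_diag. reflexivity.
      * replace (j - k)%nat with (S (j - S k)) by lia. cbn [nth]. rewrite nth_skipn. f_equal. lia.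
Qed.

Lemma VA_build (p : list pt) k x y : (k < length p)%nat -> VA p (firstn k p ++ x :: y :: skipn (S k) p) k x y.
Proof.
  intros Hk. assert (HF : length (firstn k p) = k) by (rewrite length_firstn; lia).
  split.
  - rewrite length_app, HF. cbn [length]. rewrite length_skipn. lia.
  - intros j. unfold vtx. destruct (lt_dec j k).
    + rewrite app_nth1 by lia. rewrite nth_firstn.
      replace (j <? k)%nat with true by (symmetry; apply Nat.ltb_lt; lia). reflexivity.
    + rewrite app_nth2 by lia. rewrite HF. destruct (Nat.eq_dec j k).
      * subst. rewrite Nat.sub_diag. reflexivity.
      * destruct (Nat.eq_dec j (S k)).
        -- subst. replace (S k - k)%nat with 1%nat by lia. reflexivity.
        -- replace (j - k)%nat with (S (S (j - S (S k)))) by lia. cbn [nth]. rewrite nth_skipn. f_equal. lia.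
Qed.

Lemma small_s A1 B1 A2 B2 A3 B3 : 0 <= A1 -> 0 < B1 -> 0 <= A2 -> 0 < B2 -> 0 <= A3 -> 0 < B3 ->
  exists s, 0 < s < 1 /\ s * A1 < B1 /\ s * A2 < B2 /\ s * A3 < B3.
Proof.
  intros. set (T := A1 / B1 + A2 / B2 + A3 / B3).
  assert (0 <= A1 / B1) by (unfold Rdiv; apply Rmult_le_pos; [lra | left; apply Rinv_0_lt_compat; lra]).
  assert (0 <= A2 / B2) by (unfold Rdiv; apply Rmult_le_pos; [lra | left; apply Rinv_0_lt_compat; lra]).
  assert (0 <= A3 / B3) by (unfold Rdiv; apply Rmult_le_pos; [lra | left; apply Rinv_0_lt_compat; lra]).
  assert (HT : 0 <= T) by (unfold T; lra).
  exists (/ (T + 2)).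
  assert (0 < / (T + 2)) by (apply Rinv_0_lt_compat; lra).
  assert (/ (T + 2) * (T + 2) = 1) by (field; lra).
  assert (E1 : A1 = B1 * (A1 / B1)) by (field; lra).
  assert (E2 : A2 = B2 * (A2 / B2)) by (field; lra).
  assert (E3 : A3 = B3 * (A3 / B3)) by (field; lra).
  split; [split; nra|]. split; [|split].
  - rewrite E1. assert (A1 / B1 < T + 2) by (unfold T; lra). nra.
  - rewrite E2. assert (A2 / B2 < T + 2) by (unfold T; lra). nra.
  - rewrite E3. assert (A3 / B3 < T + 2) by (unfold T; lra). nra.
Qed.

Lemma last_vtx (p : list pt) d : p <> nil -> last p d = nth (pred (length p)) p d.
Proof.
  induction p as [|a p IH]; intros H; [congruence|].
  destruct p as [|b p]; [reflexivity|].
  change (last (a :: b :: p) d) with (last (b :: p) d). rewrite IH by congruence.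
  reflexivity.
Qed.

Lemma edge_app (p : list pt) w j : (S j < length p)%nat -> edge_vec (p ++ w :: nil) j = edge_vec p j.
Proof. intros. unfold edge_vec, vtx. rewrite !app_nth1 by lia. reflexivity. Qed.

Lemma VB_edges' P Q m s a b : (S m < length P)%nat -> vtx P m = a -> vtx P (S m) = b ->
  VB P Q (S m) (vadd b (scale s (vsub a b))) -> forall j, edge_vec Q j = mB s m (edge_vec P) j.
Proof. intros H Ha Hb. subst. apply VB_edges; auto. Qed.
Lemma VC_edges' P Q m s b c : (S (S m) < length P)%nat -> vtx P (S m) = b -> vtx P (S (S m)) = c ->
  VB P Q (S m) (vadd b (scale s (vsub c b))) -> forall j, edge_vec Q j = mC s m (edge_vec P) j.
Proof. intros H Hb Hc. subst. apply VC_edges; auto. Qed.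
Lemma VA_edges' P Q m s a b c : vtx P m = a -> vtx P (S m) = b -> vtx P (S (S m)) = c ->
  VA P Q (S m) (vadd b (scale s (vsub a b))) (vadd b (scale s (vsub c b))) ->
  forall j, edge_vec Q j = mA s m (edge_vec P) j.
Proof. intros Ha Hb Hc. subst. apply VA_edges; auto. Qed.

Lemma vtx_app (p : list pt) w j : (j < length p)%nat -> vtx (p ++ w :: nil) j = vtx p j.
Proof. intros. unfold vtx. rewrite app_nth1 by lia. reflexivity. Qed.

Lemma caseB t l u U v V p i : 0 <= t <= PI/2 -> admissible t l u U v V p -> (S (S i) < length p)%nat ->
  l < vnorm (edge_vec p i) -> vnorm (edge_vec p (S i)) < l ->
  exists q, admissible t l u U v V q /\ path_length q < path_length p.
Proof.
  intros Ht (Hd & (Hs0 & Hsd) & (He0 & Hed) & Hnz) Hi Hlong Hshort.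
  apply dcc_DE in Hd as [Hpn HD]. apply dcc_DE in Hsd as [_ HDs]. apply dcc_DE in Hed as [_ HDe].
  apply nzt_NZ in Hnz.
  assert (C01 : cross (edge_vec p i) (edge_vec p (S i)) <> 0) by (apply (NZ_cross t l (pred (length p))); auto; lia).
  assert (N0 : edge_vec p i <> z0) by (apply (proj1 HD); lia).
  pose proof (vnorm_pos _ N0) as P0.
  assert (Hs : exists s, 0 < s < 1 /\ s * vnorm (edge_vec p i) < vnorm (edge_vec p i) - l /\
     ((S (S (S i)) < length p)%nat -> s * Rabs (cross (edge_vec p i) (edge_vec p (S (S i)))) <
        Rabs (cross (edge_vec p (S i)) (edge_vec p (S (S i)))))).
  { destruct (lt_dec (S (S (S i))) (length p)) as [H3|H3].
    - assert (C12 : cross (edge_vec p (S i)) (edge_vec p (S (S i))) <> 0)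
        by (apply (NZ_cross t l (pred (length p))); auto; lia).
      destruct (small_s (vnorm (edge_vec p i)) (vnorm (edge_vec p i) - l)
        (Rabs (cross (edge_vec p i) (edge_vec p (S (S i))))) (Rabs (cross (edge_vec p (S i)) (edge_vec p (S (S i)))))
        0 1) as (s & A & B & C & _); try lra; try apply Rabs_pos; try (apply Rabs_pos_lt; auto).
      exists s; auto.
    - destruct (small_s (vnorm (edge_vec p i)) (vnorm (edge_vec p i) - l) 0 1 0 1) as (s & A & B & _); try lra.
      exists s; split; auto; split; auto; intros; lia. }
  destruct Hs as (s & Hs & Hs1 & Hs2).
  assert (Hl1 : l < (1 - s) * vnorm (edge_vec p i)) by lra.
  set (x := vadd (vtx p (S i)) (scale s (vsub (vtx p i) (vtx p (S i))))).
  set (q := firstn (S i) p ++ x :: skipn (S (S i)) p).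
  assert (HV : VB p q (S i) x) by (apply VB_build; lia).
  assert (HL : length q = length p) by apply (proj1 HV).
  assert (Hedge : forall j, edge_vec q j = mB s i (edge_vec p) j)
    by (apply (VB_edges' p q i s (vtx p i) (vtx p (S i))); auto; lia).
  assert (Hqn : q <> nil) by (intro Hn; rewrite Hn in HL; simpl in HL; lia).
  exists q. split.
  - split; [|split; [|split]].
    + apply dcc_DE. split; auto. rewrite HL.
      apply DE_ext with (mB s i (edge_vec p)); [intros; symmetry; auto|].
      apply DE_B; auto; lia.
    + split.
      * rewrite (proj2 HV 0%nat). destruct (Nat.eq_dec 0%nat (S i)); [lia|auto].
      * apply dcc_DE. split; [congruence|].
        assert (HV2 : VB (vsub u U :: p) (vsub u U :: q) (S (S i)) x) by (apply VB_cons; auto).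
        assert (He2 : forall j, edge_vec (vsub u U :: q) j = mB s (S i) (edge_vec (vsub u U :: p)) j)
          by (apply (VB_edges' _ _ (S i) s (vtx p i) (vtx p (S i))); auto; simpl; lia).
        replace (pred (length (vsub u U :: q))) with (pred (length (vsub u U :: p))) by (simpl; lia).
        apply DE_ext with (mB s (S i) (edge_vec (vsub u U :: p))); [intros; symmetry; auto|].
        apply DE_B; auto; simpl; lia.
    + split.
      * rewrite last_vtx by auto. rewrite HL. change (nth (pred (length p)) q (0,0)) with (vtx q (pred (length p))).
        rewrite (proj2 HV). destruct (Nat.eq_dec (pred (length p)) (S i)); [lia|].
        rewrite <- He0, last_vtx by auto. reflexivity.
      * apply dcc_DE. split; [intro Hn; apply app_eq_nil in Hn; destruct Hn; discriminate|].
        set (w := vadd v V).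
        assert (HV2 : VB (p ++ w :: nil) (q ++ w :: nil) (S i) x) by (apply VB_app; auto; lia).
        assert (He2 : forall j, edge_vec (q ++ w :: nil) j = mB s i (edge_vec (p ++ w :: nil)) j).
        { apply (VB_edges' _ _ i s (vtx p i) (vtx p (S i))); auto.
          rewrite length_app; simpl; lia. apply vtx_app; lia. apply vtx_app; lia. }
        replace (pred (length (q ++ w :: nil))) with (pred (length (p ++ w :: nil)))
          by (rewrite !length_app; simpl; lia).
        apply DE_ext with (mB s i (edge_vec (p ++ w :: nil))); [intros; symmetry; auto|].
        apply DE_B; auto. rewrite length_app; simpl; lia.
        rewrite edge_app by lia. auto. rewrite edge_app by lia. auto.
    + apply nzt_NZ. rewrite HL. apply NZ_ext with (mB s i (edge_vec p)); [intros; symmetry; auto|].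
      apply (NZ_B t l); auto; try lia. intro; apply Hs2; lia.
  - rewrite !path_length_sum, HL.
    rewrite (sumR_ext (fun j => vnorm (edge_vec q j)) (fun j => vnorm (mB s i (edge_vec p) j)))
      by (intros; rewrite Hedge; auto).
    apply len_B; auto; lia.
Qed.

Lemma caseC t l u U v V p i : 0 <= t <= PI/2 -> admissible t l u U v V p -> (S (S i) < length p)%nat ->
  vnorm (edge_vec p i) < l -> l < vnorm (edge_vec p (S i)) ->
  exists q, admissible t l u U v V q /\ path_length q < path_length p.
Proof.
  intros Ht (Hd & (Hs0 & Hsd) & (He0 & Hed) & Hnz) Hi Hshort Hlong.
  apply dcc_DE in Hd as [Hpn HD]. apply dcc_DE in Hsd as [_ HDs]. apply dcc_DE in Hed as [_ HDe].
  apply nzt_NZ in Hnz.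
  assert (C01 : cross (edge_vec p i) (edge_vec p (S i)) <> 0) by (apply (NZ_cross t l (pred (length p))); auto; lia).
  assert (N1 : edge_vec p (S i) <> z0) by (apply (proj1 HD); lia).
  pose proof (vnorm_pos _ N1) as P1.
  assert (Hs : exists s, 0 < s < 1 /\ s * vnorm (edge_vec p (S i)) < vnorm (edge_vec p (S i)) - l /\
     (forall m', i = S m' -> s * Rabs (cross (edge_vec p m') (edge_vec p (S i))) <
        Rabs (cross (edge_vec p m') (edge_vec p i)))).
  { destruct i as [|m'].
    - destruct (small_s (vnorm (edge_vec p 1)) (vnorm (edge_vec p 1) - l) 0 1 0 1) as (s & A & B & _); try lra.
      exists s; split; auto; split; auto; intros; lia.
    - assert (C12 : cross (edge_vec p m') (edge_vec p (S m')) <> 0)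
        by (apply (NZ_cross t l (pred (length p))); auto; lia).
      destruct (small_s (vnorm (edge_vec p (S (S m')))) (vnorm (edge_vec p (S (S m'))) - l)
        (Rabs (cross (edge_vec p m') (edge_vec p (S (S m'))))) (Rabs (cross (edge_vec p m') (edge_vec p (S m'))))
        0 1) as (s & A & B & C & _); try lra; try apply Rabs_pos; try (apply Rabs_pos_lt; auto).
      exists s; split; [auto|split; [auto|]]. intros m'' Hm. injection Hm; intros; subst; auto. }
  destruct Hs as (s & Hs & Hs1 & Hs2).
  assert (Hl1 : l < (1 - s) * vnorm (edge_vec p (S i))) by lra.
  set (x := vadd (vtx p (S i)) (scale s (vsub (vtx p (S (S i))) (vtx p (S i))))).
  set (q := firstn (S i) p ++ x :: skipn (S (S i)) p).
  assert (HV : VB p q (S i) x) by (apply VB_build; lia).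
  assert (HL : length q = length p) by apply (proj1 HV).
  assert (Hedge : forall j, edge_vec q j = mC s i (edge_vec p) j)
    by (apply (VC_edges' p q i s (vtx p (S i)) (vtx p (S (S i)))); auto; lia).
  assert (Hqn : q <> nil) by (intro Hn; rewrite Hn in HL; simpl in HL; lia).
  exists q. split.
  - split; [|split; [|split]].
    + apply dcc_DE. split; auto. rewrite HL.
      apply DE_ext with (mC s i (edge_vec p)); [intros; symmetry; auto|].
      apply DE_C; auto; lia.
    + split.
      * rewrite (proj2 HV 0%nat). destruct (Nat.eq_dec 0%nat (S i)); [lia|auto].
      * apply dcc_DE. split; [congruence|].
        assert (HV2 : VB (vsub u U :: p) (vsub u U :: q) (S (S i)) x) by (apply VB_cons; auto).
        assert (He2 : forall j, edge_vec (vsub u U :: q) j = mC s (S i) (edge_vec (vsub u U :: p)) j)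
          by (apply (VC_edges' _ _ (S i) s (vtx p (S i)) (vtx p (S (S i)))); auto; simpl; lia).
        replace (pred (length (vsub u U :: q))) with (pred (length (vsub u U :: p))) by (simpl; lia).
        apply DE_ext with (mC s (S i) (edge_vec (vsub u U :: p))); [intros; symmetry; auto|].
        apply DE_C; auto; simpl; lia.
    + split.
      * rewrite last_vtx by auto. rewrite HL. change (nth (pred (length p)) q (0,0)) with (vtx q (pred (length p))).
        rewrite (proj2 HV). destruct (Nat.eq_dec (pred (length p)) (S i)); [lia|].
        rewrite <- He0, last_vtx by auto. reflexivity.
      * apply dcc_DE. split; [intro Hn; apply app_eq_nil in Hn; destruct Hn; discriminate|].
        set (w := vadd v V).
        assert (HV2 : VB (p ++ w :: nil) (q ++ w :: nil) (S i) x) by (apply VB_app; auto; lia).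
        assert (He2 : forall j, edge_vec (q ++ w :: nil) j = mC s i (edge_vec (p ++ w :: nil)) j).
        { apply (VC_edges' _ _ i s (vtx p (S i)) (vtx p (S (S i)))); auto.
          rewrite length_app; simpl; lia. apply vtx_app; lia. apply vtx_app; lia. }
        replace (pred (length (q ++ w :: nil))) with (pred (length (p ++ w :: nil)))
          by (rewrite !length_app; simpl; lia).
        apply DE_ext with (mC s i (edge_vec (p ++ w :: nil))); [intros; symmetry; auto|].
        apply DE_C; auto. rewrite length_app; simpl; lia.
        rewrite edge_app by lia. auto. rewrite edge_app by lia. auto.
    + apply nzt_NZ. rewrite HL. apply NZ_ext with (mC s i (edge_vec p)); [intros; symmetry; auto|].
      apply (NZ_C t l); auto; try lia.
  - rewrite !path_length_sum, HL.
    rewrite (sumR_ext (fun j => vnorm (edge_vec q j)) (fun j => vnorm (mC s i (edge_vec p) j)))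
      by (intros; rewrite Hedge; auto).
    apply len_C; auto; lia.
Qed.

Lemma caseA t l u U v V p i : 0 <= t <= PI/2 -> admissible t l u U v V p -> (S (S i) < length p)%nat ->
  l < vnorm (edge_vec p i) -> l < vnorm (edge_vec p (S i)) ->
  exists q, admissible t l u U v V q /\ path_length q < path_length p.
Proof.
  intros Ht (Hd & (Hs0 & Hsd) & (He0 & Hed) & Hnz) Hi Hl0 Hl1.
  apply dcc_DE in Hd as [Hpn HD]. apply dcc_DE in Hsd as [_ HDs]. apply dcc_DE in Hed as [_ HDe].
  apply nzt_NZ in Hnz.
  assert (C01 : cross (edge_vec p i) (edge_vec p (S i)) <> 0) by (apply (NZ_cross t l (pred (length p))); auto; lia).
  destruct (small_s (vnorm (edge_vec p i)) (vnorm (edge_vec p i) - l) (vnorm (edge_vec p (S i)))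
     (vnorm (edge_vec p (S i)) - l) 0 1) as (s & Hs & Hs1 & Hs2 & _); try lra; try apply vnorm_ge0.
  assert (Hm0 : l < (1 - s) * vnorm (edge_vec p i)) by lra.
  assert (Hm1 : l < (1 - s) * vnorm (edge_vec p (S i))) by lra.
  set (x := vadd (vtx p (S i)) (scale s (vsub (vtx p i) (vtx p (S i))))).
  set (y := vadd (vtx p (S i)) (scale s (vsub (vtx p (S (S i))) (vtx p (S i))))).
  set (q := firstn (S i) p ++ x :: y :: skipn (S (S i)) p).
  assert (HV : VA p q (S i) x y) by (apply VA_build; lia).
  assert (HL : length q = S (length p)) by apply (proj1 HV).
  assert (Hedge : forall j, edge_vec q j = mA s i (edge_vec p) j)
    by (apply (VA_edges' p q i s (vtx p i) (vtx p (S i)) (vtx p (S (S i)))); auto).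
  assert (Hqn : q <> nil) by (intro Hn; rewrite Hn in HL; simpl in HL; lia).
  exists q. split.
  - split; [|split; [|split]].
    + apply dcc_DE. split; auto.
      replace (pred (length q)) with (S (pred (length p))) by lia.
      apply DE_ext with (mA s i (edge_vec p)); [intros; symmetry; auto|].
      apply DE_A; auto; lia.
    + split.
      * rewrite (proj2 HV 0%nat). destruct (lt_dec 0%nat (S i)); [auto|lia].
      * apply dcc_DE. split; [congruence|].
        assert (HV2 : VA (vsub u U :: p) (vsub u U :: q) (S (S i)) x y) by (apply VA_cons; auto).
        assert (He2 : forall j, edge_vec (vsub u U :: q) j = mA s (S i) (edge_vec (vsub u U :: p)) j)
          by (apply (VA_edges' _ _ (S i) s (vtx p i) (vtx p (S i)) (vtx p (S (S i)))); auto).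
        replace (pred (length (vsub u U :: q))) with (S (pred (length (vsub u U :: p)))) by (simpl; lia).
        apply DE_ext with (mA s (S i) (edge_vec (vsub u U :: p))); [intros; symmetry; auto|].
        apply DE_A; auto; simpl; lia.
    + split.
      * rewrite last_vtx by auto. rewrite HL. change (nth (pred (S (length p))) q (0,0)) with (vtx q (length p)).
        rewrite (proj2 HV). destruct (lt_dec (length p) (S i)); [lia|].
        destruct (Nat.eq_dec (length p) (S i)); [lia|]. destruct (Nat.eq_dec (length p) (S (S i))); [lia|].
        rewrite <- He0, last_vtx by auto. reflexivity.
      * apply dcc_DE. split; [intro Hn; apply app_eq_nil in Hn; destruct Hn; discriminate|].
        set (w := vadd v V).
        assert (HV2 : VA (p ++ w :: nil) (q ++ w :: nil) (S i) x y) by (apply VA_app; auto; lia).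
        assert (He2 : forall j, edge_vec (q ++ w :: nil) j = mA s i (edge_vec (p ++ w :: nil)) j).
        { apply (VA_edges' _ _ i s (vtx p i) (vtx p (S i)) (vtx p (S (S i)))); auto;
          apply vtx_app; lia. }
        replace (pred (length (q ++ w :: nil))) with (S (pred (length (p ++ w :: nil))))
          by (rewrite !length_app; simpl; lia).
        apply DE_ext with (mA s i (edge_vec (p ++ w :: nil))); [intros; symmetry; auto|].
        apply DE_A; auto. rewrite length_app; simpl; lia.
        rewrite edge_app by lia. auto. rewrite edge_app by lia. auto.
    + apply nzt_NZ. replace (pred (length q)) with (S (pred (length p))) by lia.
      apply NZ_ext with (mA s i (edge_vec p)); [intros; symmetry; auto|].
      apply (NZ_A t l); auto; try lia.
  - rewrite !path_length_sum. replace (pred (length q)) with (S (pred (length p))) by lia.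
    rewrite (sumR_ext (fun j => vnorm (edge_vec q j)) (fun j => vnorm (mA s i (edge_vec p) j)))
      by (intros; rewrite Hedge; auto).
    apply len_A; auto; lia.
Qed.

Theorem lemma1 (theta l : R) (k : nat)
  (Htheta0 : 0 <= theta) (Htheta1 : theta <= PI / 2)
  (Hk : theta * INR k = 2 * PI) (Hl : 0 < l)
  (u U v V : pt) (HU : is_config l u U) (HV : is_config l v V)
  (p : list pt) (Hp : discrete_dubins theta l u U v V p) :
  forall i, (S (S i) < length p)%nat ->
    ((is_short l p i \/ is_long l p i) -> is_normal l p (S i)) /\
    ((is_short l p (S i) \/ is_long l p (S i)) -> is_normal l p i).
Proof.
  intros i Hi.
  assert (Ht : 0 <= theta <= PI / 2) by lra.
  destruct Hp as [Hadm Hmin].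
  assert (Key : ~ ((vnorm (edge_vec p i) < l \/ vnorm (edge_vec p i) > l) /\
                   (vnorm (edge_vec p (S i)) < l \/ vnorm (edge_vec p (S i)) > l))).
  { intros [[A|A] [B|B]].
    - destruct Hadm as (Hd & _). destruct Hd as (_ & _ & _ & H3 & _).
      apply (H3 i Hi). split; auto.
    - destruct (caseC theta l u U v V p i Ht Hadm Hi A B) as (q & Hq & Hlt).
      pose proof (Hmin q Hq). lra.
    - destruct (caseB theta l u U v V p i Ht Hadm Hi A B) as (q & Hq & Hlt).
      pose proof (Hmin q Hq). lra.
    - destruct (caseA theta l u U v V p i Ht Hadm Hi A B) as (q & Hq & Hlt).
      pose proof (Hmin q Hq). lra. }
  unfold is_short, is_long, is_normal, edge_len in *.
  split; intros H.
  - destruct (Rtotal_order (vnorm (edge_vec p (S i))) l) as [B|[B|B]]; auto; exfalso; apply Key; auto.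
  - destruct (Rtotal_order (vnorm (edge_vec p i)) l) as [B|[B|B]]; auto; exfalso; apply Key; auto.
Qed.
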